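(* Let $X$ be a quandle, $A$ an abelian group, and $\varphi:X\times X\to A$ a quandle 2-cocycle. Let $E=X\times_\varphi A$ be the abelian extension with operation $(x,a)\star(y,b)=(x*y,\ a+\varphi(x,y))$, and $\pi:E\to X$ the projection $(x,a)\mapsto x$. Then there is a cochain map $\kappa^*:C_b^*(E,\mathbb R)\to C_b^*(X,\mathbb R)$ with $\|\kappa^n f\|_\infty\le\|f\|_\infty$ and $\kappa^n\circ\pi^n_b=\mathrm{id}$ for all $n\ge1$, where $\pi^n_b f=f\circ\pi^{\times n}$. Consequently, the induced map $\pi_b^*:H_b^n(X,\mathbb R)\to H_b^n(E,\mathbb R)$ is injective for every $n\ge1$.
   Context: A quandle 2-cocycle with values in an abelian group $A$ is a map $\varphi:X\times X\to A$ with $\varphi(x,x)=0$ and $\varphi(x,y)+\varphi(x*y,z)=\varphi(x,z)+\varphi(x*z,y*z)$ for all $x,y,z\in X$; then $E=X\times_\varphi A$ is a quandle. For a quandle (or rack) $Y$, $C_b^n(Y,\mathbb R)$ is the space of bounded maps $Y^n\to\mathbb R$ ($Y^0$ a point), with coboundary $\delta f(y_1,\dots,y_n)=\sum_{i=2}^n(-1)^i\big(f(y_1,\dots,\widehat{y_i},\dots,y_n)-f(y_1*y_i,\dots,y_{i-1}*y_i,y_{i+1},\dots,y_n)\big)$; $H_b^n(Y,\mathbb R)$ is the cohomology of this complex. (Abelian groups admit a left-invariant mean, i.e. a positive, normalized, translation-invariant linear functional on bounded real functions.) *)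

(* Defs.v *)
From HB Require Import structures.
From mathcomp Require Import all_boot all_order all_algebra.
From Stdlib Require Import Reals.
From mathcomp Require Import Rstruct.
Set Implicit Arguments. Unset Strict Implicit. Unset Printing Implicit Defensive.
Import Order.TTheory GRing.Theory Num.Theory.
Local Open Scope ring_scope.

Definition is_quandle (X : Type) (op : X -> X -> X) : Prop :=
  [/\ (forall x, op x x = x),
      (forall y, bijective (fun x => op x y)) &
      (forall x y z, op (op x y) z = op (op x z) (op y z))].

Definition quandle_2cocycle (X : Type) (op : X -> X -> X) (A : zmodType)
  (phi : X -> X -> A) : Prop :=
  (forall x, phi x x = 0) /\
  (forall x y z, phi x y + phi (op x y) z = phi x z + phi (op x z) (op y z)).

Definition ext_op (X : Type) (op : X -> X -> X) (A : zmodType)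
  (phi : X -> X -> A) (p q : X * A) : X * A :=
  (op p.1 q.1, p.2 + phi p.1 q.1).

Definition cochain (Y : Type) (n : nat) := ('I_n -> Y) -> R.

Definition bounded_cochain (Y : Type) (n : nat) (f : cochain Y n) : Prop :=
  exists M : R, forall y, `|f y| <= M.

Definition del_coord (Y : Type) (n : nat) (y : 'I_n.+1 -> Y) (j : 'I_n.+1)
  : 'I_n -> Y := fun k => y (lift j k).

Definition act_coord (Y : Type) (op : Y -> Y -> Y) (n : nat)
  (y : 'I_n.+1 -> Y) (j : 'I_n.+1) : 'I_n -> Y :=
  fun k => if ltn (nat_of_ord k) (nat_of_ord j) then op (y (lift j k)) (y j) else y (lift j k).

(* Coboundary C^n -> C^{n+1}:
   delta f (y_1..y_{n+1}) = sum_{i=2}^{n+1} (-1)^i (f(..^y_i..) - f(y_1*y_i,..,y_{i-1}*y_i,y_{i+1},..)).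
   Here j is the 0-based index, i = j+1. *)
Definition coboundary (Y : Type) (op : Y -> Y -> Y) (n : nat)
  (f : cochain Y n) : cochain Y n.+1 :=
  fun y => \sum_(j < n.+1 | ltn 0 (nat_of_ord j))
             (-1) ^+ j.+1 * (f (del_coord y j) - f (act_coord op y j)).

Definition pullback_proj (X : Type) (A : zmodType) (n : nat)
  (f : cochain X n) : cochain (X * A) n :=
  fun e => f (fun k => (e k).1).

(* Main.v *)
Require Import Defs.
From HB Require Import structures.
From mathcomp Require Import all_boot all_order all_algebra.
From Stdlib Require Import Reals.
From mathcomp Require Import Rstruct.
From mathcomp Require Import boolp classical_sets filter reals.
From mathcomp Require Import ring lra.
Import Order.TTheory GRing.Theory Num.Theory.
Local Open Scope ring_scope.
Local Open Scope classical_set_scope.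
Set Implicit Arguments. Unset Strict Implicit.
Section ULim.
Variables (T : Type) (U : set_system T).
Hypothesis UU : UltraFilter U.

Definition islim (u : T -> R) (l : R) :=
  forall e : R, 0 < e -> U [set i | `|u i - l| < e].

Lemma U_ex {P : set T} : U P -> exists i, P i.
Proof. move=> UP. exact: (@filter_ex _ U ultra_proper P UP). Qed.

Lemma UI {P Q : set T} : U P -> U Q -> U (P `&` Q).
Proof. move=> HP HQ. exact: (@filterI _ U ultra_proper P Q HP HQ). Qed.

Lemma US {P Q : set T} : P `<=` Q -> U P -> U Q.
Proof. move=> PQ HP. exact: (@filterS _ U ultra_proper P Q PQ HP). Qed.

Lemma UT : U setT.
Proof. exact: (@filterT _ U ultra_proper). Qed.

Lemma ulim_ex (u : T -> R) (M : R) : (forall i, `|u i| <= M) -> exists l, islim u l.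
Proof.
move=> hM.
pose S := [set y : R | U [set i | y <= u i]].
have hS : has_sup S.
  split.
    exists (- M); change (U [set i | - M <= u i]); apply: US UT => i _ /=.
    by have := hM i; rewrite ler_norml => /andP[].
  exists M => y Sy.
  have [i /= hi] := U_ex Sy.
  have := hM i; rewrite ler_norml => /andP[_ h]; exact: le_trans hi h.
exists (sup S) => e e0.
have e20 : 0 < e / 2 by lra.
have [y Sy hy] := sup_adherent e20 hS.
have nS : ~ S (sup S + e / 2).
  move=> /(sup_upper_bound hS); lra.
have [H|H] := in_ultra_setVsetC [set i | sup S + e / 2 <= u i] UU.
  by exfalso; apply: nS.
have Sy' : U [set i | y <= u i] := Sy.
eapply US; last exact: (UI Sy' H).
move=> i /= [h1 h2].
have h3 : u i < sup S + e / 2 by rewrite ltNge; apply/negP.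
rewrite ltr_norml; apply/andP; split; lra.
Qed.

Lemma ulim_uniq u l1 l2 : islim u l1 -> islim u l2 -> l1 = l2.
Proof.
move=> h1 h2; case: (eqVneq l1 l2) => // hne; exfalso.
have n0 : 0 < `|l1 - l2| by rewrite normr_gt0 subr_eq0.
have e0 : 0 < `|l1 - l2| / 2 by lra.
have [i [/= a b]] := U_ex (UI (h1 _ e0) (h2 _ e0)).
have : `|l1 - l2| <= `|u i - l1| + `|u i - l2|.
  rewrite (distrC (u i)); have -> : l1 - l2 = (l1 - u i) + (u i - l2) by ring.
  exact: ler_normD.
lra.
Qed.

Lemma ulim_lin c u v l1 l2 : islim u l1 -> islim v l2 ->
  islim (fun i => c * u i + v i) (c * l1 + l2).
Proof.
move=> h1 h2 e e0.
have c0 : 0 < `|c| + 1 by have := normr_ge0 c; lra.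
have e'0 : 0 < e / (2 * (`|c| + 1)) by rewrite divr_gt0 //; lra.
apply: US (UI (h1 _ e'0) (h2 _ e'0)) => i /= [a b].
have hb : `|c * u i + v i - (c * l1 + l2)| <= `|c| * `|u i - l1| + `|v i - l2|.
  have -> : c * u i + v i - (c * l1 + l2) = c * (u i - l1) + (v i - l2) by ring.
  by rewrite -normrM ler_normD.
have ha : `|c| * `|u i - l1| <= `|c| * (e / (2 * (`|c| + 1))).
  by rewrite ler_wpM2l // ltW.
have hid : `|c| * (e / (2 * (`|c| + 1))) + e / (2 * (`|c| + 1)) = e / 2.
  by field; lra.
lra.
Qed.

Lemma ulim_bnd u M l : (forall i, `|u i| <= M) -> islim u l -> `|l| <= M.
Proof.
move=> hM hl; rewrite leNgt; apply/negP => hlt.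
have e0 : 0 < `|l| - M by lra.
have [i /= hi] := U_ex (hl _ e0).
have : `|l| <= `|u i| + `|u i - l|.
  have h := ler_normD (u i) (l - u i).
  have e1 : u i + (l - u i) = l by ring.
  by rewrite e1 (distrC l) in h.
have := hM i; lra.
Qed.

Lemma ulim_cst c : islim (fun _ => c) c.
Proof. by move=> e e0; apply: US UT => i _ /=; rewrite subrr normr0. Qed.

End ULim.
Lemma close_eq (x y : R) : (forall e, 0 < e -> `|x - y| < 3 * e) -> x = y.
Proof.
move=> h; case: (eqVneq x y) => // hne; exfalso.
have n0 : 0 < `|x - y| by rewrite normr_gt0 subr_eq0.
have e0 : 0 < `|x - y| / 3 by lra.
have := h _ e0; lra.
Qed.

Section Mean.
Variable A : zmodType.

Fixpoint avg (s : seq A) (K : nat) (f : A -> R) : R :=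
  match s with
  | [::] => f 0
  | a :: s' => GRing.mul (K%:R^-1) (\sum_(i < K) avg s' K (fun x => f (x + a *+ i)))
  end.

Lemma avg_bnd (s : seq A) (K : nat) (f : A -> R) (B : R) : leq 1 K -> (forall x, `|f x| <= B) -> `|avg s K f| <= B.
Proof.
move=> K0; elim: s f => [|a s IH] f hf /=; first exact: hf.
have Kp : 0 < K%:R :> R by rewrite ltr0n.
rewrite normrM normfV normr_nat.
have hs : `|\sum_(i < K) avg s K (fun x => f (x + a *+ i))| <= B *+ K.
  apply: le_trans (ler_norm_sum _ _ _) _.
  have -> : B *+ K = \sum_(i < K) B by rewrite sumr_const card_ord.
  by apply: ler_sum => i _; apply: IH => x; apply: hf.
have Kne : K%:R != 0 :> R by rewrite gt_eqF.
have -> : B = K%:R^-1 * (B *+ K) by rewrite -mulr_natr; field.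
by rewrite ler_wpM2l // invr_ge0 ltW.
Qed.

Lemma avg_lin (s : seq A) (K : nat) (c : R) (f g : A -> R) :
  avg s K (fun x => c * f x + g x) = c * avg s K f + avg s K g.
Proof.
elim: s f g => [|a s IH] f g //=.
under eq_bigr do rewrite (IH (fun x => f (x + a *+ _)) (fun x => g (x + a *+ _))).
by rewrite big_split /= -mulr_sumr mulrDr mulrCA.
Qed.

Lemma avg_cst (s : seq A) (K : nat) (c : R) : leq 1 K -> avg s K (fun _ => c) = c.
Proof.
move=> K0; elim: s => [|a s IH] //=.
under eq_bigr do rewrite IH.
have Kne : K%:R != 0 :> R by rewrite pnatr_eq0 -lt0n.
by rewrite sumr_const card_ord -mulr_natr; field.
Qed.

Lemma avg_inv (s : seq A) (K : nat) (f : A -> R) (B : R) (b : A) : leq 1 K -> b \in s -> (forall x, `|f x| <= B) ->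
  `|avg s K (fun x => f (x + b)) - avg s K f| <= 2 * B / K%:R.
Proof.
move=> K0; elim: s f => [|a s IH] f // + hf; rewrite in_cons => /orP[/eqP ->|bs] /=.
  pose g n := avg s K (fun x => f (x + a *+ n)).
  have e1 : \sum_(i < K) avg s K (fun x => f (x + a *+ i + a)) = \sum_(i < K) g i.+1.
    apply: eq_bigr => i _; rewrite /g; congr avg; apply: funext => x.
    by rewrite mulrS addrA (addrC _ a) -addrA (addrC _ a) addrA.
  rewrite e1 -mulrBr -sumrB.
  have e2 : \sum_(i < K) (g i.+1 - g i) = g K - g 0%N.
    by rewrite -(big_mkord xpredT (fun i => g i.+1 - g i)) telescope_sumr.
  rewrite e2 normrM normfV normr_nat.
  have hg : forall n, `|g n| <= B by move=> n; apply: avg_bnd => // x; apply: hf.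
  have : `|g K - g 0%N| <= 2 * B.
    apply: le_trans (ler_normB _ _) _; have := hg K; have := hg 0%N; lra.
  have Kp : 0 < K%:R :> R by rewrite ltr0n.
  move=> h; rewrite mulrC ler_wpM2r // ?invr_ge0 ?ltW //.
rewrite -mulrBr -sumrB normrM normfV normr_nat.
have Kp : 0 < K%:R :> R by rewrite ltr0n.
have hs : `|\sum_(i < K) (avg s K (fun x => f (x + a *+ i + b)) -
           avg s K (fun x => f (x + a *+ i)))| <= (2 * B / K%:R) *+ K.
  apply: le_trans (ler_norm_sum _ _ _) _.
  have -> : (2 * B / K%:R) *+ K = \sum_(i < K) (2 * B / K%:R) by rewrite sumr_const card_ord.
  apply: ler_sum => i _.
  have -> : (fun x => f (x + a *+ i + b)) = (fun x => (fun y => f (y + a *+ i)) (x + b)).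
    by apply: funext => x /=; rewrite -addrA (addrC (a *+ i)) addrA.
  by apply: IH => // x; apply: hf.
apply: le_trans (ler_wpM2l _ hs) _; first by rewrite invr_ge0 ltW.
have Kne : K%:R != 0 :> R by rewrite gt_eqF.
set t := 2 * B / K%:R; by rewrite -[t *+ K]mulr_natr mulrCA mulVf // mulr1.
Qed.

End Mean.
Section Mean2.
Variable A : zmodType.

Definition Ind := (seq A * nat)%type.
Definition baseF : set_system Ind :=
  [set P : set Ind | exists (s0 : seq A) (k0 : nat), forall (s : seq A) (k : nat),
     {subset s0 <= s} -> leq k0 k -> P (s, k)].

Lemma baseF_proper : ProperFilter baseF.
Proof.
apply: Build_ProperFilter_ex.
  by move=> P [s0 [k0 h]]; exists (s0, k0); apply: h.
split.
- by exists [::], 0%N.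
- move=> P Q [s0 [k0 hP]] [s1 [k1 hQ]]; exists (s0 ++ s1), (maxn k0 k1) => s k hs hk.
  rewrite geq_max in hk; case/andP: hk => h0 h1.
  split; [apply: hP | apply: hQ] => // x hx; apply: hs; rewrite mem_cat hx ?orbT //.
- by move=> P Q PQ [s0 [k0 h]]; exists s0, k0 => s k h1 h2; apply: PQ; apply: h.
Qed.

Definition UFsig := cid (ultraFilterLemma baseF_proper).
Definition UF : set_system Ind := proj1_sig UFsig.
Lemma UF_ultra : UltraFilter UF.
Proof. exact: (proj1 (proj2_sig UFsig)). Qed.
Lemma UF_base : baseF `<=` UF.
Proof. exact: (proj2 (proj2_sig UFsig)). Qed.

Definition mu (i : Ind) (f : A -> R) : R := avg i.1 i.2.+1 f.
Definition mean (f : A -> R) : R := xget 0 (islim UF (fun i => mu i f)).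

Definition bnd (T : Type) (f : T -> R) := exists B, forall x, `|f x| <= B.

Lemma mean_lim f : bnd f -> islim UF (fun i => mu i f) (mean f).
Proof.
move=> [B hB]; apply: xgetPex.
apply: (ulim_ex UF_ultra (M := B)) => i; exact: avg_bnd.
Qed.

Lemma mean_lin c f g : bnd f -> bnd g ->
  mean (fun x => c * f x + g x) = c * mean f + mean g.
Proof.
move=> bf bg.
have bh : bnd (fun x => c * f x + g x).
  case: bf => B1 h1; case: bg => B2 h2; exists (`|c| * B1 + B2) => x.
  apply: le_trans (ler_normD _ _) _; rewrite normrM.
  by apply: lerD => //; apply: ler_wpM2l.
apply: (ulim_uniq UF_ultra (mean_lim bh)).
have := ulim_lin UF_ultra c (mean_lim bf) (mean_lim bg).
suff -> : (fun i => c * mu i f + mu i g) = (fun i => mu i (fun x => c * f x + g x)) by [].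
by apply: funext => i; rewrite /mu avg_lin.
Qed.

Lemma mean_bnd f B : (forall x, `|f x| <= B) -> `|mean f| <= B.
Proof.
move=> hB; apply: (ulim_bnd UF_ultra (u := fun i => mu i f)).
  by move=> i; apply: avg_bnd.
by apply: mean_lim; exists B.
Qed.

Lemma mean_cst c : mean (fun _ => c) = c.
Proof.
have b : bnd (fun _ : A => c) by exists `|c|.
apply: (ulim_uniq UF_ultra (mean_lim b)).
have -> : (fun i => mu i (fun _ => c)) = (fun _ => c).
  by apply: funext => i; rewrite /mu avg_cst.
exact: (@ulim_cst _ UF UF_ultra c).
Qed.

Lemma mean_inv f b : bnd f -> mean (fun x => f (x + b)) = mean f.
Proof.
move=> bf; have bf' : bnd (fun x => f (x + b)) by case: bf => B h; exists B.
case: (bf) => B hB.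
have B0 : 0 <= B by apply: le_trans (hB 0).
apply: close_eq => e e0.
have h1 := mean_lim bf' e0; have h2 := mean_lim bf e0.
pose k0 := Num.Def.archi_bound (2 * B / e).
have hk0 : 2 * B / e < k0%:R by apply: archi_boundP; apply: divr_ge0; [rewrite mulr_ge0 // ler0n | exact: ltW].
have h3 : UF [set i : Ind | b \in i.1 /\ leq k0 i.2].
  apply: UF_base; exists [:: b], k0 => s k hs hk; split => //.
  by apply: hs; rewrite inE.
have [[s k] [[/= a1 a2] [a3 a4]]] := U_ex UF_ultra (UI UF_ultra (UI UF_ultra h1 h2) h3).
have := @avg_inv A s k.+1 f B b isT a3 hB.
rewrite /mu /= in a1 a2.
have Kp : 0 < k.+1%:R :> R by rewrite ltr0n.
have hK : k0%:R <= k.+1%:R :> R by rewrite ler_nat; apply: leq_trans a4 _.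
have q1 : 2 * B / e * e = 2 * B by field; lra.
have q2 : 2 * B / k.+1%:R * k.+1%:R = 2 * B.
  by field; rewrite addrC natr1 pnatr_eq0.
have s1 : 2 * B / e * e < k.+1%:R * e.
  by rewrite ltr_pM2r //; apply: lt_le_trans hk0 hK.
have q3 : 2 * B / k.+1%:R < e.
  by rewrite -(ltr_pM2r Kp) q2 -{1}q1 (mulrC e).
move=> h.
have : `|mean (fun x => f (x + b)) - mean f| <=
  `|avg s k.+1 (fun x => f (x + b)) - mean (fun x => f (x + b))| +
  `|avg s k.+1 (fun x => f (x + b)) - avg s k.+1 f| + `|avg s k.+1 f - mean f|.
  set p := avg s k.+1 (fun x => f (x + b)); set q := avg s k.+1 f.
  set m1 := mean _; set m2 := mean f.
  have -> : m1 - m2 = - (p - m1) + (p - q) + (q - m2) by ring.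
  by rewrite -(normrN (p - m1)); apply: le_trans (ler_normD _ _) _; rewrite lerD2r ler_normD.
move=> H; apply: le_lt_trans H _.
have -> : 3 * e = e + e + e by ring.
by rewrite ltrD // ltrD // (le_lt_trans h q3).
Qed.

End Mean2.
Section Mn.
Variable A : zmodType.

Definition cons_fn n (a : A) (b : 'I_n -> A) : 'I_n.+1 -> A :=
  fun i => match unlift ord0 i with None => a | Some j => b j end.

Lemma cons_fn0 n a (b : 'I_n -> A) : cons_fn a b ord0 = a.
Proof. by rewrite /cons_fn unlift_none. Qed.

Lemma cons_fnS n a (b : 'I_n -> A) k : cons_fn a b (lift ord0 k) = b k.
Proof. by rewrite /cons_fn liftK. Qed.

Fixpoint Mn (n : nat) : (('I_n -> A) -> R) -> R :=
  match n with
  | 0 => fun F => F (fun _ => 0)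
  | n'.+1 => fun F => mean (fun a => @Mn n' (fun b => F (cons_fn a b)))
  end.

Lemma Mn_bnd n (F : ('I_n -> A) -> R) B : (forall a, `|F a| <= B) -> `|Mn F| <= B.
Proof.
elim: n F => [|n IH] F hF /=; first exact: hF.
by apply: mean_bnd => a; apply: IH => b; apply: hF.
Qed.

Lemma bnd_Mn n (F : A -> ('I_n -> A) -> R) B : (forall a b, `|F a b| <= B) ->
  bnd (fun a => Mn (F a)).
Proof. by move=> h; exists B => a; apply: Mn_bnd. Qed.

Lemma Mn_lin n c (F G : ('I_n -> A) -> R) : bnd F -> bnd G ->
  Mn (fun a => c * F a + G a) = c * Mn F + Mn G.
Proof.
elim: n F G => [|n IH] F G bF bG //=.
case: (bF) => B1 h1; case: (bG) => B2 h2.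
have e : (fun a => Mn (fun b => c * F (cons_fn a b) + G (cons_fn a b))) =
  (fun a => c * Mn (fun b => F (cons_fn a b)) + Mn (fun b => G (cons_fn a b))).
  apply: funext => a; apply: IH; [exists B1 | exists B2] => b; [exact: h1|exact: h2].
rewrite e; apply: mean_lin.
  by apply: (@bnd_Mn _ (fun a b => F (cons_fn a b)) B1).
by apply: (@bnd_Mn _ (fun a b => G (cons_fn a b)) B2).
Qed.

Lemma Mn_cst n c : Mn (fun _ : 'I_n -> A => c) = c.
Proof. by elim: n => [|n IH] //=; rewrite IH mean_cst. Qed.

Lemma Mn_inv n (F : ('I_n -> A) -> R) (c : 'I_n -> A) : bnd F ->
  Mn (fun a => F (fun k => a k + c k)) = Mn F.
Proof.
elim: n F c => [|n IH] F c bF /=.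
  by congr F; apply: funext => -[].
case: (bF) => B hB.
have e : forall a, Mn (fun b => F (fun k => cons_fn a b k + c k)) =
   Mn (fun b => F (cons_fn (a + c ord0) b)).
  move=> a.
  have e1 : forall b : 'I_n -> A, (fun k => cons_fn a b k + c k) =
      cons_fn (a + c ord0) (fun k => b k + c (lift ord0 k)).
    move=> b; apply: funext => k; case: (unliftP ord0 k) => [k'|] ->.
      by rewrite !cons_fnS.
    by rewrite !cons_fn0.
  under eq_fun do rewrite e1.
  by apply: (IH (fun b => F (cons_fn (a + c ord0) b)) (fun k => c (lift ord0 k))); exists B.
under eq_fun do rewrite e.
have bM : bnd (fun a => Mn (fun b => F (cons_fn a b))) by apply: (bnd_Mn (B := B)).
exact: (@mean_inv A (fun a => Mn (fun b => F (cons_fn a b))) (c ord0) bM).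
Qed.

Lemma Mn_unf n (F : ('I_n.+1 -> A) -> R) :
  Mn F = mean (fun a => Mn (fun b => F (cons_fn a b))).
Proof. by []. Qed.

Lemma lift_lift0 n (j : 'I_n.+1) (k : 'I_n) :
  lift (lift ord0 j) (lift ord0 k) = lift ord0 (lift j k).
Proof.
by apply: val_inj => /=; rewrite /bump /= !add1n ltnS addnS.
Qed.

Lemma lift_lift00 n (j : 'I_n.+1) : lift (lift ord0 j) ord0 = ord0 :> 'I_n.+2.
Proof. by apply: val_inj => /=; rewrite /bump. Qed.

Lemma Mn_del n (G : ('I_n -> A) -> R) (j : 'I_n.+1) : bnd G ->
  Mn (fun a : 'I_n.+1 -> A => G (fun k => a (lift j k))) = Mn G.
Proof.
elim: n G j => [|n IH] G j bG.
  case: (unliftP ord0 j) => [[]//|->] /=.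
  rewrite (_ : (fun a => G (fun k => cons_fn a (fun _ : 'I_0 => 0) (lift ord0 k))) = fun _ => G (fun _ => 0)).
    by rewrite mean_cst.
  by apply: funext => a; congr G; apply: funext => -[].
case: (bG) => B hB.
case: (unliftP ord0 j) => [j'|] ->; rewrite !Mn_unf.
  have e : forall a, Mn (fun b => G (fun k => cons_fn a b (lift (lift ord0 j') k))) =
     Mn (fun b => G (cons_fn a b)).
    move=> a.
    have e1 : forall b : 'I_n.+1 -> A,
        (fun k => cons_fn a b (lift (lift ord0 j') k)) = cons_fn a (fun k => b (lift j' k)).
      move=> b; apply: funext => k; case: (unliftP ord0 k) => [k'|] ->.
        by rewrite lift_lift0 !cons_fnS.
      by rewrite lift_lift00 !cons_fn0.
    under eq_fun do rewrite e1.
    by apply: (IH (fun b => G (cons_fn a b))); exists B.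
  by under eq_fun do rewrite e.
have e : forall a, Mn (fun b => G (fun k => cons_fn a b (lift ord0 k))) = Mn G.
  by move=> a; congr Mn; apply: funext => b; congr G; apply: funext => k; rewrite cons_fnS.
by under eq_fun do rewrite e; rewrite mean_cst.
Qed.


End Mn.
Lemma bnd_sum (T I : Type) (r : seq I) (P : pred I) (F : I -> T -> R) :
  (forall j, bnd (F j)) -> bnd (fun a => \sum_(j <- r | P j) F j a).
Proof.
move=> hF; elim: r => [|x r [B hB]].
  by exists 0 => a; rewrite big_nil normr0.
case: (hF x) => B1 h1; exists (B1 + B) => a; rewrite big_cons.
have B10 : 0 <= B1 by apply: le_trans (h1 a).
have B0 : 0 <= B by apply: le_trans (hB a).
case: (P x).
  by apply: le_trans (ler_normD _ _) _; apply: lerD.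
by apply: le_trans (hB a) _; rewrite lerDr.
Qed.

Lemma bnd_cB (T : Type) c (F G : T -> R) : bnd F -> bnd G -> bnd (fun a => c * (F a - G a)).
Proof.
move=> [B1 h1] [B2 h2]; exists (`|c| * (B1 + B2)) => a; rewrite normrM.
apply: ler_wpM2l => //; apply: le_trans (ler_normB _ _) _; exact: lerD.
Qed.

Section Mn2.
Variable A : zmodType.

Lemma Mn_sum n (I : Type) (r : seq I) (P : pred I) (F : I -> ('I_n -> A) -> R) :
  (forall j, bnd (F j)) ->
  Mn (fun a => \sum_(j <- r | P j) F j a) = \sum_(j <- r | P j) Mn (F j).
Proof.
move=> hF; elim: r => [|x r IH].
  by rewrite big_nil; under eq_fun do rewrite big_nil; rewrite Mn_cst.
rewrite big_cons; under eq_fun do rewrite big_cons.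
case: (P x) => //.
rewrite -IH -[Mn (F x)]mul1r -Mn_lin //; last exact: bnd_sum.
by congr Mn; apply: funext => a; rewrite mul1r.
Qed.

Lemma Mn_cB n c (F G : ('I_n -> A) -> R) : bnd F -> bnd G ->
  Mn (fun a => c * (F a - G a)) = c * (Mn F - Mn G).
Proof.
move=> bF bG.
have bG' : bnd (fun a => (- c) * G a + 0).
  by case: bG => B h; exists (`|c| * B) => a; rewrite addr0 normrM normrN ler_wpM2l.
have e : (fun a => c * (F a - G a)) = (fun a => c * F a + ((- c) * G a + 0)).
  by apply: funext => a; ring.
rewrite e Mn_lin // Mn_lin //; last by exists 0 => a; rewrite normr0.
by rewrite Mn_cst; ring.
Qed.

End Mn2.

Definition kap (X : Type) (A : zmodType) n (f : cochain (X * A) n) : cochain X n :=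
  fun x => Mn (fun a => f (fun k => (x k, a k))).

Lemma kap_bnd X (A : zmodType) n (f : cochain (X * A) n) M :
  (forall e, `|f e| <= M) -> forall x, `|kap f x| <= M.
Proof. by move=> h x; apply: Mn_bnd. Qed.

Lemma kap_lin X (A : zmodType) n (f g : cochain (X * A) n) (c : R) :
  bounded_cochain f -> bounded_cochain g ->
  kap (fun e => c * f e + g e) = (fun x => c * kap f x + kap g x).
Proof.
move=> [B1 h1] [B2 h2]; apply: funext => x; rewrite /kap Mn_lin //.
  by exists B1.
by exists B2.
Qed.

Lemma kap_pi X (A : zmodType) n (f : cochain X n) :
  kap (@pullback_proj X A _ f) = f.
Proof. by apply: funext => x; rewrite /kap /pullback_proj /= Mn_cst. Qed.

Lemma kap_cob X (op : X -> X -> X) (A : zmodType) (phi : X -> X -> A) n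
  (f : cochain (X * A) n) : bounded_cochain f ->
  kap (coboundary (ext_op op phi) f) = coboundary op (kap f).
Proof.
move=> [B hB]; apply: funext => x; rewrite /kap /coboundary.
have bf : forall (T : Type) (h : T -> 'I_n -> X * A), bnd (fun a => f (h a)).
  by move=> T h; exists B.
rewrite Mn_sum; last by move=> j; apply: bnd_cB; exists B => a; apply: hB.
apply: eq_bigr => j _; rewrite Mn_cB; try by exists B => a; apply: hB.
have e1 : Mn (fun a : 'I_n.+1 -> A => f (del_coord (fun k => (x k, a k)) j)) =
          Mn (fun a : 'I_n -> A => f (fun k => (del_coord x j k, a k))).
  exact: (@Mn_del A n (fun b => f (fun k => (x (lift j k), b k))) j (bf _ (fun b k => (x (lift j k), b k)))).
pose c (k : 'I_n) := if ltn k j then phi (x (lift j k)) (x j) else 0.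
have e2 : (fun a : 'I_n.+1 -> A => f (act_coord (ext_op op phi) (fun k => (x k, a k)) j)) =
    (fun a => (fun b => f (fun k => (act_coord op x j k, b k + c k))) (fun k => a (lift j k))).
  apply: funext => a /=; congr f; apply: funext => k.
  rewrite /act_coord /ext_op /c /=; case: ifP => //= _; by rewrite addr0.
rewrite e1 e2 (@Mn_del A n (fun b => f (fun k => (act_coord op x j k, b k + c k))) j); last by exists B => a; apply: hB.
rewrite (@Mn_inv A n (fun b => f (fun k => (act_coord op x j k, b k))) c (bf _ (fun b k => (act_coord op x j k, b k)))).
by [].
Qed.
Local Close Scope classical_set_scope.
Unset Implicit Arguments.

Theorem mainTheorem18 (X : Type) (op : X -> X -> X) (A : zmodType)
  (phi : X -> X -> A) :
  is_quandle op -> quandle_2cocycle op phi ->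
  (exists kappa : forall n : nat, cochain (X * A) n -> cochain X n,
     (* kappa^n maps bounded cochains to bounded cochains and is linear on them *)
     (forall n (f : cochain (X * A) n), bounded_cochain f ->
        bounded_cochain (kappa n f)) /\
     (forall n (f g : cochain (X * A) n) (c : R),
        bounded_cochain f -> bounded_cochain g ->
        kappa n (fun e => c * f e + g e) = (fun x => c * kappa n f x + kappa n g x)) /\
     (* cochain map: kappa^{n+1} o delta_E = delta_X o kappa^n *)
     (forall n (f : cochain (X * A) n), bounded_cochain f ->
        kappa n.+1 (coboundary (ext_op op phi) f) = coboundary op (kappa n f)) /\
     (* ||kappa^n f||_oo <= ||f||_oo for n >= 1 *)
     (forall n (f : cochain (X * A) n), leq 1 n -> bounded_cochain f ->
        forall M : R, (forall e, `|f e| <= M) -> forall x, `|kappa n f x| <= M) /\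
     (* kappa^n o pi_b^n = id for n >= 1 *)
     (forall n (f : cochain X n), leq 1 n -> bounded_cochain f ->
        kappa n (@pullback_proj X A _ f) = f)) /\
  (* injectivity of pi_b^* : H_b^n(X) -> H_b^n(E), n = m+1 >= 1 *)
  (forall m (f : cochain X m.+1), bounded_cochain f ->
     coboundary op f = (fun _ => 0) ->
     (exists g : cochain (X * A) m, bounded_cochain g /\
        @pullback_proj X A _ f = coboundary (ext_op op phi) g) ->
     exists h : cochain X m, bounded_cochain h /\ f = coboundary op h).
Proof.
move=> _ _; split.
  exists (fun n => @kap X A n); split.
    by move=> n f [B hB]; exists B; apply: kap_bnd.
  split; first by move=> n f g c bf bg; apply: kap_lin.
  split; first by move=> n f bf; apply: kap_cob.
  split; first by move=> n f _ _ M hM; apply: kap_bnd.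
  by move=> n f _ _; apply: kap_pi.
move=> m f bf _ [g [[B hB] hg]].
exists (@kap X A m g); split; first by exists B; apply: kap_bnd.
rewrite -(@kap_pi X A _ f) hg kap_cob //; by exists B.
Qed.
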